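(* Let $n\ge2$ and let $x\in\mathbb{C}^{n\times n}$ be generic (as defined in the context). For each $1\le k\le n$ fix an ordering $\mu^{(k)}_1,\ldots,\mu^{(k)}_k$ of the eigenvalues of $x_k$ (note $x^T$ has the same leading principal eigenvalues, so $x^T$ is also generic and the same orderings are used for it). Let $b_m$ ($1\le m\le n-1$) be the dual coordinates of $x$ and $\tilde b_m$ those of $x^{T}$, defined with respect to these orderings. Then for $1\le m\le n-1$, \[ \operatorname{diag}(\tilde b_m)=\Pi_m\operatorname{diag}(b_m)^{-1}\Sigma_m, \] where $\Sigma_m=-P_{m+1}(\Lambda_m)\bigl(P_m'(\Lambda_m)\bigr)^{-1}$ and $\Pi_m$ is the $m\times m$ diagonal matrix defined in the context.
   Context: For a square matrix $x$, $x_k$ is its leading principal $k\times k$ submatrix, $E(x_k)$ its eigenvalue multiset, and $P_k(\lambda)=\det(\lambda I_k-x_k)$. A matrix $x\in\mathbb{C}^{n\times n}$ is generic if for every $1\le k\le n$ the eigenvalues of $x_k$ are distinct and for every $1\le k\le n-1$, $E(x_k)\cap E(x_{k+1})=\varnothing$. Let $\Lambda_k=\operatorname{diag}(\mu^{(k)}_1,\ldots,\mu^{(k)}_k)$. For generic $x$ and $1\le m\le n-1$, let $g_m\in\mathrm{GL}(m)$ be the unique matrix with $x_m=g_m\Lambda_mg_m^{-1}$ whose last row consists of ones; the dual coordinates $b_m\in\mathbb{C}^m$ (and $c_m\in\mathbb{C}^m$, $\delta_{m+1}\in\mathbb{C}$) of $x$ are defined by $\begin{pmatrix} g_m^{-1}&0\\0&1\end{pmatrix}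 x_{m+1}\begin{pmatrix} g_m&0\\0&1\end{pmatrix}=\begin{pmatrix}\Lambda_m & c_m\\ b_m^{T} & \delta_{m+1}\end{pmatrix}$. $\operatorname{diag}(v)$ is the diagonal matrix with diagonal $v$; $P(\Lambda_m)$ is the diagonal matrix with entries $P(\mu^{(m)}_i)$. $\Pi_m$ is the $m\times m$ diagonal matrix with entries \[ (\Pi_m)_{jj}=1-\sum_{i=1}^{m-1}\frac{\prod_{k=1}^{m}(\mu^{(m-1)}_i-\mu^{(m)}_k)}{(\mu^{(m)}_j-\mu^{(m-1)}_i)^2\prod_{k\ne i,\,1\le k\le m-1}(\mu^{(m-1)}_i-\mu^{(m-1)}_k)},\qquad 1\le j\le m \] (so $\Pi_1=(1)$); it is the diagonal matrix relating row and column eigenvectors of the arrow matrix $\begin{pmatrix}\Lambda_{m-1}&c_{m-1}\\ b_{m-1}^T&\delta_m\end{pmatrix}$, equivalently the diagonal matrix for which the last row of $(g_m^{-1})^{T}\Pi_m$ consists of ones. *)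

(* Defs.v *)
From HB Require Import structures.
From mathcomp Require Import all_boot all_order all_algebra.
Set Implicit Arguments. Unset Strict Implicit. Unset Printing Implicit Defensive.
Import Order.TTheory GRing.Theory Num.Theory.
Local Open Scope ring_scope.

Section Defs.
Variable C : numClosedFieldType.

(* entry (i,j) of x, with 0 outside the range (never used for k <= n) *)
Definition mxentry n (x : 'M[C]_n) (i j : nat) : C :=
  match (insub i : option 'I_n), (insub j : option 'I_n) with
  | Some i', Some j' => x i' j'
  | _, _ => 0
  end.

Definition lead_sub n (x : 'M[C]_n) (k : nat) : 'M[C]_k :=
  \matrix_(i < k, j < k) mxentry x i j.

Definition Pk n (x : 'M[C]_n) (k : nat) : {poly C} := char_poly (lead_sub x k).

Definition eigen_multiset k (a : 'M[C]_k) (s : seq C) : Prop :=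
  char_poly a = \prod_(z <- s) ('X - z%:P).

Definition generic n (x : 'M[C]_n) : Prop :=
  (forall k s, (1 <= k <= n)%N -> eigen_multiset (lead_sub x k) s -> uniq s) /\
  (forall k s t, (1 <= k <= n - 1)%N ->
     eigen_multiset (lead_sub x k) s -> eigen_multiset (lead_sub x k.+1) t ->
     forall z, z \in s -> z \notin t).

Definition eigen_ordering k (a : 'M[C]_k) (mu : 'I_k -> C) : Prop :=
  char_poly a = \prod_(i < k) ('X - (mu i)%:P).

Definition Lam m (mu : 'I_m -> C) : 'M[C]_m := diag_mx (\row_i mu i).

Definition polyLam (p : {poly C}) m (mu : 'I_m -> C) : 'M[C]_m :=
  diag_mx (\row_i p.[mu i]).

Definition dual_b n (x : 'M[C]_n) (mu : forall k, 'I_k -> C) (m : nat)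
    (b : 'rV[C]_m) : Prop :=
  exists (g : 'M[C]_m) (c : 'cV[C]_m) (delta : C),
    [/\ g \in unitmx,
        (forall i j : 'I_m, i.+1 = m -> g i j = 1),
        lead_sub x m = g *m Lam (mu m) *m invmx g &
        (block_mx (invmx g) 0 0 1%:M : 'M[C]_(m + 1)) *m lead_sub x (m + 1)
          *m (block_mx g 0 0 1%:M : 'M[C]_(m + 1))
        = block_mx (Lam (mu m)) c b delta%:M].

Definition Pi (mu : forall k, 'I_k -> C) (m : nat) : 'M[C]_m :=
  diag_mx (\row_(j < m)
    (1 - \sum_(i < m.-1)
       (\prod_(k < m) (mu m.-1 i - mu m k))
       / ((mu m j - mu m.-1 i) ^+ 2 *
          \prod_(k < m.-1 | k != i) (mu m.-1 i - mu m.-1 k)))).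

Definition Sigma n (x : 'M[C]_n) (mu : forall k, 'I_k -> C) (m : nat) : 'M[C]_m :=
  - (polyLam (Pk x m.+1) (mu m) *m invmx (polyLam (Pk x m)^`() (mu m))).

End Defs.

Arguments dual_b {C n} x mu m b.
Arguments Pi {C} mu m.
Arguments Sigma {C n} x mu m.
Arguments lead_sub {C n} x k.

(* Main.v *)
Require Import Defs.
From HB Require Import structures.
From mathcomp Require Import all_boot all_order all_algebra.
From mathcomp Require Import fingroup perm zify ring.
Set Implicit Arguments. Unset Strict Implicit. Unset Printing Implicit Defensive.
Import Order.TTheory GRing.Theory Num.Theory.
Local Open Scope ring_scope.

Lemma mxentry_tr (C : numClosedFieldType) n (x : 'M[C]_n) i j :
  mxentry x^T i j = mxentry x j i.
Proof.
rewrite /mxentry; case: (insub i) => [i'|]; case: (insub j) => [j'|] //.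
by rewrite mxE.
Qed.

Lemma lead_sub_tr (C : numClosedFieldType) n (x : 'M[C]_n) k :
  lead_sub x^T k = (lead_sub x k)^T.
Proof. by apply/matrixP => i j; rewrite !mxE mxentry_tr. Qed.

Lemma lead_sub_block (C : numClosedFieldType) n (x : 'M[C]_n) k :
  lead_sub x (k + 1) = block_mx (lead_sub x k) (\col_i mxentry x i k)
     (\row_j mxentry x k j) (mxentry x k k)%:M.
Proof.
rewrite -[LHS]submxK; congr block_mx; apply/matrixP => i j;
  rewrite !mxE /= ?(ord1 i) ?(ord1 j) /= ?addn0 ?eqxx ?mulr1n //.
Qed.

Lemma lead_sub_last (C : numClosedFieldType) n (x : 'M[C]_n) p (z : C) :
  row' ord_max (col' ord_max (z%:M - lead_sub x p.+1)) = z%:M - lead_sub x p.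
Proof.
apply/matrixP => i j; rewrite !mxE !lift_max (inj_eq (@lift_inj _ ord_max)).
by [].
Qed.

Lemma lead_sub0 (C : numClosedFieldType) n (x : 'M[C]_n) (mu : 'I_0 -> C) :
  eigen_ordering (lead_sub x 0) mu.
Proof. by rewrite /eigen_ordering /char_poly det_mx00 big_ord0. Qed.

Lemma gen_inj (C : numClosedFieldType) n (x : 'M[C]_n) k (mu : 'I_k -> C) :
  generic x -> (1 <= k <= n)%N -> eigen_ordering (lead_sub x k) mu -> injective mu.
Proof.
move=> [G1 _] Hk Ho; apply/injectiveP; apply: (G1 k) => //.
by rewrite /eigen_multiset Ho big_map enumT.
Qed.

Lemma Pk_addn1 (C : numClosedFieldType) n (x : 'M[C]_n) k : Pk x (k + 1) = Pk x k.+1.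
Proof. by rewrite addn1. Qed.

Lemma prod_lift (R : comNzRingType) N (F : 'I_N -> R) j :
  \prod_(k < N | k != j) F k = \prod_(k < N.-1) F (lift j k).
Proof.
rewrite big_mkcond (bigD1_ord j) //= eqxx mul1r.
by apply: eq_bigr => i _; rewrite eq_sym neq_lift.
Qed.
Lemma char_poly_horner (R : comNzRingType) n (A : 'M[R]_n) (a : R) :
  (char_poly A).[a] = \det (a%:M - A).
Proof.
rewrite /char_poly -horner_evalE -det_map_mx; congr (\det _).
apply/matrixP=> i j; rewrite !mxE /= horner_evalE.
by rewrite hornerD hornerN hornerMn hornerX hornerC.
Qed.

Lemma deriv_prod_root (R : comNzRingType) m (c : 'I_m -> R) (j : 'I_m) :
  (\prod_(i < m) ('X - (c i)%:P))^`().[c j] = \prod_(k < m | k != j) (c j - c k).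
Proof.
rewrite (bigD1 j) //= derivM derivXsubC mul1r hornerD hornerM hornerXsubC subrr mul0r addr0.
by rewrite horner_prod; apply: eq_bigr => k _; rewrite hornerXsubC.
Qed.

Lemma prod_horner (R : comNzRingType) m (c : 'I_m -> R) z :
  (\prod_(i < m) ('X - (c i)%:P)).[z] = \prod_(i < m) (z - c i).
Proof. by rewrite horner_prod; apply: eq_bigr => k _; rewrite hornerXsubC. Qed.
Lemma prod_zero_factor (R : comNzRingType) N (F : 'I_N -> R) i :
  F i = 0 -> \prod_(k < N) F k = 0.
Proof. by move=> H; rewrite (bigD1 i) //= H mul0r. Qed.

Lemma det_arrow (R : comNzRingType) N (E : 'M[R]_N) (j e : 'I_N) :
  j != e ->
  (forall k, k != e -> E j k = 0) ->
  (forall i, i != e -> E i j = 0) ->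
  (forall i k, i != e -> k != e -> i != k -> E i k = 0) ->
  \det E = - (E j e * E e j * \prod_(i < N | (i != j) && (i != e)) E i i).
Proof.
move=> nje Hr Hc Ho.
rewrite /determinant (bigD1 (tperm j e)) //= [X in _ + X]big1 ?addr0; last first.
  move=> s Hs.
  have [sj|sj] := eqVneq (s j) e; last by rewrite (@prod_zero_factor _ _ (fun k => E k (s k)) j (Hr _ sj)) mulr0.
  have [se|se] := eqVneq (s e) j; last first.
    have Hi : (s^-1)%g j != e.
      by apply: contraNneq se => <-; rewrite permKV.
    by rewrite (@prod_zero_factor _ _ (fun k => E k (s k)) ((s^-1)%g j)) ?mulr0 // permKV Hc.
  have : ~~ [forall i, s i == tperm j e i].
    apply: contra Hs => /forallP H; apply/eqP/permP => i; exact/eqP.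
  rewrite negb_forall => /existsP [i Hi].
  have ij : i != j by apply: contraNneq Hi => ->; rewrite tpermL sj.
  have ie : i != e by apply: contraNneq Hi => ->; rewrite tpermR se.
  move: Hi; rewrite tpermD 1?eq_sym // => Hi.
  have sie : s i != e by rewrite -sj (inj_eq perm_inj).
  by rewrite (@prod_zero_factor _ _ (fun k => E k (s k)) i) ?mulr0 // Ho // eq_sym.
rewrite odd_tperm nje expr1 mulN1r; congr (- _).
rewrite (bigD1 j) //= tpermL (bigD1 e) /=; last by rewrite eq_sym.
rewrite tpermR mulrA; congr (_ * _).
by apply: eq_bigr => i /andP [ij ie]; rewrite tpermD // eq_sym.
Qed.
Lemma adj_conj (R : fieldType) n (g B : 'M[R]_n) : g \in unitmx ->
  \adj (g *m B *m invmx g) = g *m \adj B *m invmx g.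
Proof.
move=> gU.
pose Bt : 'M[{poly R}]_n := 'X%:M + map_mx polyC B.
pose G : 'M[{poly R}]_n := map_mx polyC g.
pose Gi : 'M[{poly R}]_n := map_mx polyC (invmx g).
have GGi : G *m Gi = 1 by rewrite -map_mxM mulmxV // map_mx1.
have GiG : Gi *m G = 1 by rewrite -map_mxM mulVmx // map_mx1.
have dBt : \det Bt != 0.
  have -> : Bt = char_poly_mx (- B) by rewrite /char_poly_mx map_mxN opprK.
  exact: monic_neq0 (char_poly_monic _).
pose Mt := G *m Bt *m Gi.
have EMt : Mt = 'X%:M + map_mx polyC (g *m B *m invmx g).
  rewrite /Mt /Bt mulmxDr mulmxDl scalar_mxC -(mulmxA 'X%:M) GGi mulmx1.
  by rewrite !map_mxM.
have dMt : \det Mt = \det Bt.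
  by rewrite /Mt !det_mulmx mulrAC -det_mulmx GGi det1 mul1r.
have key : \adj Mt = G *m \adj Bt *m Gi.
  apply/eqP; rewrite -subr_eq0; apply/eqP.
  have H1 : (\adj Mt - G *m \adj Bt *m Gi) *m Mt = 0.
    rewrite mulmxBl mul_adj_mx /Mt !mulmxA -(mulmxA _ Gi G) GiG mulmx1.
    rewrite -(mulmxA _ (\adj Bt)) mul_adj_mx dMt scalar_mxC -mulmxA GGi mulmx1.
    by rewrite subrr.
  have H2 := congr1 (mulmx^~ (\adj Mt)) H1.
  move: H2; rewrite /= -mulmxA mul_mx_adj mul0mx mul_mx_scalar => /eqP.
  rewrite scalemx_eq0 dMt (negPf dBt) /= => /eqP //.
have ev0 (M : 'M[R]_n) : map_mx (horner_eval 0) ('X%:M + map_mx polyC M) = M.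
  apply/matrixP=> i j; rewrite !mxE /= horner_evalE.
  by rewrite hornerD hornerMn hornerX hornerC mul0rn add0r.
have evC (M : 'M[R]_n) : map_mx (horner_eval 0) (map_mx polyC M) = M.
  by apply/matrixP=> i j; rewrite !mxE /= horner_evalE hornerC.
have := congr1 (map_mx (horner_eval (0:R))) key.
rewrite map_mx_adj EMt ev0 !map_mxM map_mx_adj /Bt ev0 /G /Gi !evC //.
Qed.
Lemma size_prod_ord (R : nzRingType) N (P : pred 'I_N) (c : 'I_N -> R) :
  size (\prod_(k < N | P k) ('X - (c k)%:P)) = #|P|.+1.
Proof. by rewrite -big_filter size_prod_XsubC deprecated_filter_index_enum cardE. Qed.

Lemma coef_monic_size (R : nzRingType) (p : {poly R}) N :
  p \is monic -> size p = N.+1 -> p`_N = 1.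
Proof. by move=> /monicP + Hs; rewrite /lead_coef Hs. Qed.

Lemma residue (R : fieldType) N (nu : 'I_N -> R) (z0 : R) (F : {poly R}) :
  injective nu -> (forall i, z0 != nu i) -> (size F <= N.+1)%N ->
  F.[z0] / \prod_(k < N) (z0 - nu k) +
  \sum_(i < N) F.[nu i] / ((nu i - z0) * \prod_(k < N | k != i) (nu i - nu k))
  = F`_N.
Proof.
move=> inj nz szF.
pose Q := \prod_(k < N) ('X - (nu k)%:P).
pose Qi i := ('X - z0%:P) * \prod_(k < N | k != i) ('X - (nu k)%:P).
pose a0 := F.[z0] / \prod_(k < N) (z0 - nu k).
pose a i := F.[nu i] / ((nu i - z0) * \prod_(k < N | k != i) (nu i - nu k)).
pose L := a0 *: Q + \sum_(i < N) a i *: Qi i.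
have dQ : \prod_(k < N) (z0 - nu k) != 0.
  by rewrite prodf_seq_neq0; apply/allP => k _ /=; rewrite subr_eq0 nz.
have dQi i : (nu i - z0) * \prod_(k < N | k != i) (nu i - nu k) != 0.
  apply: mulf_neq0; first by rewrite subr_eq0 eq_sym.
  by rewrite prodf_seq_neq0; apply/allP => k _; apply/implyP => ki; rewrite subr_eq0 (inj_eq inj) eq_sym.
have szQ : size Q = N.+1.
  by rewrite (size_prod_ord xpredT) cardT size_enum_ord.
have szQi i : size (Qi i) = N.+1.
  have N0 : (0 < N)%N := leq_ltn_trans (leq0n _) (ltn_ord i).
  rewrite /Qi size_monicM ?monicXsubC ?monic_neq0 ?monic_prod_XsubC //.
  rewrite size_XsubC size_prod_ord.
  have -> : #|[pred k : 'I_N | k != i]| = N.-1 by rewrite cardC1 card_ord.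
  by rewrite /= prednK.
have mQ : Q \is monic by apply: monic_prod_XsubC.
have mQi i : Qi i \is monic by rewrite monicMl ?monicXsubC ?monic_prod_XsubC.
have LF : L = F.
  apply/eqP; rewrite eq_sym -subr_eq0; apply/negPn/negP => D0.
  have := max_poly_roots D0 (rs := z0 :: map nu (enum 'I_N)).
  rewrite /= size_map size_enum_ord map_inj_uniq // enum_uniq andbT.
  have -> : z0 \notin [seq nu i | i <- enum 'I_N].
    by apply/mapP => [[k _ Hk]]; move: (nz k); rewrite Hk eqxx.
  have -> : root (F - L) z0.
    rewrite rootE hornerD hornerN /L hornerD hornerZ horner_sum big1.
      rewrite addr0 /Q horner_prod (eq_bigr (fun k => z0 - nu k)).
        by rewrite /a0 divfK // subrr.
      by move=> k _; rewrite hornerXsubC.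
    by move=> i _; rewrite hornerZ /Qi hornerM hornerXsubC subrr mul0r mulr0.
  have -> : all (root (F - L)) [seq nu i | i <- enum 'I_N].
    apply/allP => _ /mapP [l _ ->].
    rewrite rootE hornerD hornerN /L hornerD hornerZ.
    have -> : Q.[nu l] = 0.
      by rewrite /Q horner_prod (bigD1 l) //= hornerXsubC subrr mul0r.
    rewrite mulr0 add0r horner_sum (bigD1 l) //= big1 ?addr0.
      rewrite hornerZ /Qi hornerM hornerXsubC horner_prod.
      rewrite (eq_bigr (fun k => nu l - nu k)) ?divfK ?subrr //.
      by move=> k _; rewrite hornerXsubC.
    move=> i il; rewrite hornerZ /Qi hornerM horner_prod (bigD1 l) /=; last by rewrite eq_sym.
    by rewrite !hornerXsubC subrr mul0r !mulr0.
  move=> /(_ isT isT); rewrite ltnNge => /negP; apply.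
  rewrite (leq_trans (size_polyD _ _)) // geq_max szF size_polyN.
  rewrite (leq_trans (size_polyD _ _)) // geq_max.
  rewrite (leq_trans (size_scale_leq _ _)) ?szQ //=.
  rewrite (leq_trans (size_sum _ _ _)) //; apply/bigmax_leqP => i _.
  by rewrite (leq_trans (size_scale_leq _ _)) ?szQi.
rewrite -[in RHS]LF /L coefD coefZ coef_sum (coef_monic_size mQ szQ) mulr1.
by congr (_ + _); apply: eq_bigr => i _; rewrite coefZ (coef_monic_size (mQi i) (szQi i)) mulr1.
Qed.
Lemma adj_diag (R : fieldType) N (d : 'rV[R]_N) j :
  d 0 j = 0 -> (forall k, k != j -> d 0 k != 0) ->
  forall s r, (\adj (diag_mx d)) s r =
     ((s == j) && (r == j))%:R * \prod_(k < N | k != j) d 0 k.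
Proof.
move=> dj dk s r.
have d0 : \det (diag_mx d) = 0 by rewrite det_diag (bigD1 j) //= dj mul0r.
have H1 := mul_adj_mx (diag_mx d); rewrite d0 mul_mx_diag in H1.
have H2 := mul_mx_adj (diag_mx d); rewrite d0 mul_diag_mx in H2.
have [rj|rj] := eqVneq r j; last first.
  have := congr1 (fun M : 'M[R]_N => M s r) H1; rewrite !mxE mul0rn => /eqP.
  by rewrite mulf_eq0 (negPf (dk _ rj)) orbF andbF mul0r => /eqP.
have [sj|sj] := eqVneq s j; last first.
  have := congr1 (fun M : 'M[R]_N => M s r) H2; rewrite !mxE mul0rn => /eqP.
  by rewrite mulf_eq0 (negPf (dk _ sj)) /= mul0r => /eqP.
subst; rewrite mxE /cofactor -signr_odd addnn odd_double expr0 !mul1r.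
have -> : row' j (col' j (diag_mx d)) = diag_mx (\row_k d 0 (lift j k)).
  by apply/matrixP => a b; rewrite !mxE (inj_eq (@lift_inj _ j)).
by rewrite det_diag prod_lift; apply: eq_bigr => k _; rewrite mxE.
Qed.
Lemma ord_split m (k : 'I_(m + 1)) : (exists i, k = lshift 1 i) \/ k = rshift m ord0.
Proof.
rewrite -(splitK k); case: (split k) => [i|i]; first by left; exists i.
by right; rewrite (ord1 i).
Qed.

Lemma arrow_det (R : comNzRingType) m (mu : 'I_m -> R) (c : 'cV[R]_m) (b : 'rV[R]_m)
    (d z : R) j :
  mu j = z ->
  \det (z%:M - block_mx (diag_mx (\row_i mu i)) c b d%:M)
  = - (c j 0 * b 0 j * \prod_(k < m | k != j) (z - mu k)).
Proof.
move=> Hz.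
set E := z%:M - _.
have Ell i k : E (lshift 1 i) (lshift 1 k) = (z - mu i) *+ (i == k).
  by rewrite /E mxE [in X in _ + X]mxE block_mxEul !mxE (inj_eq (@lshift_inj _ _)) mulrnBl.
have Elr i : E (lshift 1 i) (rshift m ord0) = - c i 0.
  by rewrite /E mxE [in X in _ + X]mxE block_mxEur !mxE eq_lrshift mulr0n sub0r.
have Erl k : E (rshift m ord0) (lshift 1 k) = - b 0 k.
  by rewrite /E mxE [in X in _ + X]mxE block_mxEdl !mxE eq_sym eq_lrshift mulr0n sub0r.
rewrite (@det_arrow _ _ E (lshift 1 j) (rshift m ord0)); first last.
- move=> i k ie ke ik.
  case: (ord_split i) ie ik => [[i' ->]|->]; last by rewrite eqxx.
  case: (ord_split k) ke => [[k' ->]|->]; last by rewrite eqxx.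
  by move=> _ _; rewrite (inj_eq (@lshift_inj _ _)) => ik'; rewrite Ell (negPf ik') mulr0n.
- move=> i ie; case: (ord_split i) ie => [[i' ->]|->]; last by rewrite eqxx.
  move=> _; rewrite Ell; case: eqP => [->|]; first by rewrite Hz subrr mul0rn.
  by rewrite mulr0n.
- move=> k ke; case: (ord_split k) ke => [[k' ->]|->]; last by rewrite eqxx.
  move=> _; rewrite Ell Hz subrr mul0rn //.
- by rewrite eq_lrshift.
rewrite Elr Erl mulrNN; congr (- (_ * _)).
rewrite big_mkcond big_split_ord /= big_ord1 eqxx andbF mulr1.
rewrite [RHS]big_mkcond; apply: eq_bigr => k _.
rewrite (inj_eq (@lshift_inj _ _)) eq_lrshift andbT Ell eqxx mulr1n //.
Qed.

Lemma invmx_diag (R : fieldType) N (d : 'rV[R]_N) : (forall i, d 0 i != 0) ->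
  invmx (diag_mx d) = diag_mx (\row_i (d 0 i)^-1).
Proof.
move=> dn.
have H : diag_mx d *m diag_mx (\row_i (d 0 i)^-1) = 1%:M.
  by rewrite mulmx_diag; apply/matrixP => i j; rewrite !mxE divff.
have [U _] := mulmx1_unit H.
by rewrite -[RHS](mulKmx U) H mulmx1.
Qed.


Unset Implicit Arguments.

Theorem mainTheorem3 (C : numClosedFieldType) (n : nat) (x : 'M[C]_n)
    (mu : forall k : nat, 'I_k -> C) :
  (2 <= n)%N ->
  generic x ->
  (forall k : nat, (1 <= k <= n)%N -> eigen_ordering (lead_sub x k) (mu k)) ->
  forall (m : nat) (b bt : 'rV[C]_m), (1 <= m <= n - 1)%N ->
    dual_b x mu m b -> dual_b x^T mu m bt ->
    diag_mx bt = Pi mu m *m invmx (diag_mx b) *m Sigma x mu m.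
Proof.
move=> n2 gen ordk m b bt Hm Db Dbt.
case: m b bt Hm Db Dbt => [|p] b bt Hm Db Dbt; first by case/andP: Hm.
case/andP: (Hm) => Hm1 Hm2.
have Hp2 : (p.+2 <= n)%N by lia.
have ord1 := ordk p.+1 (ltac:(lia)).
have ord2 := ordk p.+2 (ltac:(lia)).
have inj1 : injective (mu p.+1) by apply: (gen_inj gen _ ord1); lia.
have ordp : eigen_ordering (lead_sub x p) (mu p).
  by case: p {Hm Hm1 Hm2 Db Dbt ord1 ord2 inj1 b bt} Hp2 => [|p] Hp2; [apply: lead_sub0 | apply: ordk; lia].
have injp : injective (mu p).
  case: p {Hm Hm1 Hm2 Db Dbt ord1 ord2 inj1 b bt} Hp2 ordp => [|p] Hp2 ordp; first by case.
  by apply: (gen_inj gen _ ordp); lia.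
case: Db => g [c [d [gU grow gA gblk]]].
case: Dbt => h [ct [dt [hU hrow hA hblk]]].
rewrite lead_sub_tr in hA.
have gblk0 := gblk.
rewrite lead_sub_block !mulmx_block in gblk.
rewrite lead_sub_tr lead_sub_block tr_block_mx !mulmx_block in hblk.
rewrite !mul0mx !mulmx0 !addr0 !add0r !mul1mx !mulmx1 in gblk hblk.
case/eq_block_mx: gblk => _ Hc Hb _.
case/eq_block_mx: hblk => _ _ Hbt _.
set A := lead_sub x p.+1 in gA hA.
set La := Lam (mu p.+1) in gA hA gblk0.
have Ag : A *m g = g *m La by rewrite gA mulmxKV.
have Ah : A^T *m h = h *m La by rewrite hA mulmxKV.
pose M := g^T *m h.
have LaT : La^T = La by rewrite /La /Lam tr_diag_mx.
have comm : La *m M = M *m La.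
  have E : La *m g^T = g^T *m A^T by rewrite -{1}LaT -trmx_mul -Ag trmx_mul.
  by rewrite /M mulmxA E -mulmxA Ah mulmxA.
have Mdiag : forall i j, i != j -> M i j = 0.
  move=> i j ij; have := congr1 (fun X : 'M[C]_p.+1 => X i j) comm.
  rewrite /La /Lam mul_diag_mx mul_mx_diag !mxE => /eqP.
  rewrite [mu _ i * _]mulrC -subr_eq0 -mulrBr mulf_eq0 subr_eq0 (inj_eq inj1).
  by rewrite (negPf ij) orbF => /eqP.
have hM : h = invmx g^T *m M by rewrite /M mulKmx // unitmx_tr.
have wM : forall j, invmx g j ord_max * M j j = 1.
  move=> j; have H := hrow ord_max j erefl.
  rewrite hM mxE (bigD1 j) //= big1 ?addr0 in H; last first.
    by move=> r rj; rewrite Mdiag ?mulr0.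
  by rewrite -trmx_inv mxE in H.
have btM : forall j, bt 0 j = c j 0 * M j j.
  move=> j; rewrite -Hbt hM mulmxA -trmx_inv -trmx_mul Hc mxE (bigD1 j) //=.
  by rewrite big1 ?addr0 ?mxE // => r rj; rewrite Mdiag ?mulr0.
have Pp : forall j, (Pk x p).[mu p.+1 j] =
    (\prod_(k < p.+1 | k != j) (mu p.+1 j - mu p.+1 k)) * invmx g j ord_max.
  move=> j; set z := mu p.+1 j.
  have E1 : (Pk x p).[z] = (\adj (z%:M - A)) ord_max ord_max.
    rewrite /Pk char_poly_horner mxE /cofactor -signr_odd addnn odd_double expr0 mul1r.
    by rewrite /A lead_sub_last.
  have E2 : z%:M - A = g *m (z%:M - La) *m invmx g.
    by rewrite mulmxBr mulmxBl -gA scalar_mxC -mulmxA mulmxV // mulmx1.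
  have Ld : z%:M - La = diag_mx (\row_k (z - mu p.+1 k)).
    by apply/matrixP => a a'; rewrite /La /Lam !mxE mulrnBl.
  have AD : forall s r, (\adj (diag_mx (\row_k (z - mu p.+1 k)))) s r =
      ((s == j) && (r == j))%:R * \prod_(k < p.+1 | k != j) (z - mu p.+1 k).
    move=> s r; rewrite (@adj_diag _ _ _ j).
    - by congr (_ * _); apply: eq_bigr => k _; rewrite mxE.
    - by rewrite mxE subrr.
    - by move=> k kj; rewrite mxE subr_eq0 (inj_eq inj1) eq_sym.
  rewrite E1 E2 adj_conj // Ld mxE (bigD1 j) //= big1 ?addr0; last first.
    move=> r rj; rewrite mxE big1 ?mul0r // => s _.
    by rewrite AD (negPf rj) andbF mul0r mulr0.
  rewrite mxE (bigD1 j) //= big1 ?addr0; last first.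
    by move=> s sj; rewrite AD (negPf sj) mul0r mulr0.
  by rewrite AD eqxx mul1r grow // mul1r.
have P2 : forall j, (Pk x p.+2).[mu p.+1 j] =
    - (c j 0 * b 0 j * \prod_(k < p.+1 | k != j) (mu p.+1 j - mu p.+1 k)).
  move=> j; set z := mu p.+1 j.
  rewrite -Pk_addn1 /Pk char_poly_horner.
  set X1 := lead_sub x (p.+1 + 1) in gblk0 *.
  set Gi := block_mx (invmx g) 0 0 1%:M in gblk0.
  set G := block_mx g 0 0 1%:M in gblk0.
  have GiG : Gi *m G = 1.
    rewrite /Gi /G mulmx_block !mulmx0 !mul0mx !addr0 !add0r mulVmx // mul1mx.
    by rewrite -scalar_mx_block.
  have EE : z%:M - block_mx La c b d%:M = Gi *m (z%:M - X1) *m G.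
    by rewrite -gblk0 mulmxBr mulmxBl scalar_mxC -(mulmxA z%:M) GiG mulmx1.
  have -> : \det (z%:M - X1) = \det (z%:M - block_mx La c b d%:M).
    by rewrite EE !det_mulmx mulrAC -det_mulmx GiG det1 mul1r.
  by rewrite /La /Lam (arrow_det _ _ _ _ (j:=j)).
have Pj0 : forall j, \prod_(k < p.+1 | k != j) (mu p.+1 j - mu p.+1 k) != 0.
  move=> j; rewrite prodf_seq_neq0; apply/allP => k _; apply/implyP => kj.
  by rewrite subr_eq0 (inj_eq inj1) eq_sym.
have P2n0 : forall j, (Pk x p.+2).[mu p.+1 j] != 0.
  move=> j; rewrite /Pk ord2 prod_horner.
  rewrite prodf_seq_neq0; apply/allP => k _ /=; rewrite subr_eq0; apply/eqP => E.
  case: gen => _ G2.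
  have Hs : eigen_multiset (lead_sub x p.+1) [seq mu p.+1 i | i <- enum 'I_p.+1].
    by rewrite /eigen_multiset ord1 big_map enumT.
  have Ht : eigen_multiset (lead_sub x p.+2) [seq mu p.+2 i | i <- enum 'I_p.+2].
    by rewrite /eigen_multiset ord2 big_map enumT.
  have Hin : mu p.+1 j \in [seq mu p.+1 i | i <- enum 'I_p.+1].
    by rewrite map_f ?mem_enum.
  have := G2 p.+1 _ _ (ltac:(lia)) Hs Ht _ Hin.
  by rewrite E map_f ?mem_enum.
have bn0 : forall j, b 0 j != 0.
  move=> j; move: (P2n0 j); rewrite P2; apply: contra => /eqP ->.
  by rewrite mulr0 mul0r oppr0.
have wn0 : forall j, invmx g j ord_max != 0.
  by move=> j; apply/eqP => E; move: (wM j); rewrite E mul0r => /eqP; rewrite eq_sym oner_eq0.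
have Dn : forall j, (Pk x p.+1)^`().[mu p.+1 j] =
    \prod_(k < p.+1 | k != j) (mu p.+1 j - mu p.+1 k).
  by move=> j; rewrite /Pk ord1 deriv_prod_root.
rewrite /Sigma /polyLam (invmx_diag bn0) invmx_diag; last by move=> i; rewrite mxE Dn.
rewrite /Pi !mulmx_diag mulmxN mulmx_diag.
apply/matrixP => i k; rewrite !mxE.
case: eqP => [E|_]; last by rewrite !mulr0n oppr0.
subst k.
rewrite !mulr1n btM P2 Dn /=.
set z := mu p.+1 i.
set Pj := \prod_(k < p.+1 | k != i) (z - mu p.+1 k).
pose F := \prod_(k < p.+1 | k != i) ('X - (mu p.+1 k)%:P).
have FE : F.[z] = Pj by rewrite horner_prod; apply: eq_bigr => k _; rewrite hornerXsubC.
have Fv : forall t, \prod_(k < p.+1) (t - mu p.+1 k) = (t - z) * F.[t].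
  move=> t; rewrite (bigD1 i) //= horner_prod; congr (_ * _).
  by apply: eq_bigr => k _; rewrite hornerXsubC.
have Qz : (Pk x p).[z] = \prod_(k < p) (z - mu p k) by rewrite /Pk ordp prod_horner.
have Qn0 : \prod_(k < p) (z - mu p k) != 0 by rewrite -Qz Pp mulf_neq0.
have nz : forall i0, z != mu p i0.
  move=> i0; apply: contraNneq Qn0 => E.
  by rewrite (bigD1 i0) //= E subrr mul0r.
have szF : (size F <= p.+1)%N.
  rewrite size_prod_ord.
  have -> : #|[pred k : 'I_p.+1 | k != i]| = p by rewrite cardC1 card_ord.
  by [].
have F1 : F`_p = 1.
  apply: coef_monic_size; first exact: monic_prod_XsubC.
  rewrite size_prod_ord.
  have -> : #|[pred k : 'I_p.+1 | k != i]| = p by rewrite cardC1 card_ord.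
  by [].
have R := residue injp nz szF; rewrite F1 FE in R.
have Pn0 : forall i0, \prod_(k < p | k != i0) (mu p i0 - mu p k) != 0.
  move=> i0; rewrite prodf_seq_neq0; apply/allP => k _; apply/implyP => ki.
  by rewrite subr_eq0 (inj_eq injp) eq_sym.
rewrite (eq_bigr (fun i0 => F.[mu p i0] /
   ((mu p i0 - z) * \prod_(k < p | k != i0) (mu p i0 - mu p k)))); last first.
  move=> i0 _; rewrite Fv.
  have d0 : mu p i0 - z != 0 by rewrite subr_eq0 eq_sym nz.
  by field; rewrite (Pn0 i0) d0 /= subr_eq0 nz.
set S := \sum_(i0 < p) _ in R *.
have SE : S = 1 - Pj / \prod_(k < p) (z - mu p k).
  by rewrite -{1}R addrC addKr.
have Mw : M i i = (invmx g i ord_max)^-1.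
  by apply: (mulfI (wn0 i)); rewrite wM divff.
rewrite SE Mw -Qz Pp.
rewrite -/z -/Pj.
by field; rewrite (wn0 i) (Pj0 i) (bn0 i).
Qed.
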